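(* For every integer $n>1$ there exists a nonassociative noncommutative C-loop whose nucleus has exactly $n$ elements.
   Context: A C-loop is a loop satisfying $x(y(yz))=((xy)y)z$ for all $x,y,z$. The nucleus of a loop is the set of elements $a$ with $a(yz)=(ay)z$, $y(az)=(ya)z$, $y(za)=(yz)a$ for all $y,z$. *)

(* Defs.v *)
From Stdlib Require Import List.
Import ListNotations.

Definition is_loop {L : Type} (op : L -> L -> L) (e : L) : Prop :=
  (forall x, op e x = x /\ op x e = x) /\
  (forall a b, exists! x, op a x = b) /\
  (forall a b, exists! y, op y a = b).

Definition is_C_identity {L : Type} (op : L -> L -> L) : Prop :=
  forall x y z, op x (op y (op y z)) = op (op (op x y) y) z.

Definition is_C_loop {L : Type} (op : L -> L -> L) (e : L) : Prop :=
  is_loop op e /\ is_C_identity op.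

Definition in_nucleus {L : Type} (op : L -> L -> L) (a : L) : Prop :=
  forall y z,
    op a (op y z) = op (op a y) z /\
    op y (op a z) = op (op y a) z /\
    op y (op z a) = op (op y z) a.

Definition associative_op {L : Type} (op : L -> L -> L) : Prop :=
  forall x y z, op x (op y z) = op (op x y) z.

Definition commutative_op {L : Type} (op : L -> L -> L) : Prop :=
  forall x y, op x y = op y x.

Definition has_exactly {L : Type} (P : L -> Prop) (n : nat) : Prop :=
  exists l : list L, NoDup l /\ length l = n /\ (forall a, In a l <-> P a).

(* Main.v *)
Require Import Defs.
From HB Require Import structures.
From mathcomp Require Import all_boot all_algebra.
From mathcomp Require Import ring.
Import GRing.Theory.
Local Open Scope ring_scope.
Inductive S := s0 | s1 | s2 | s3 | s4 | s5 | s6 | s7 | s8 | e.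
Definition opS (x y : S) : S := match x, y with
  | s0, s0 => e
  | s0, s1 => s2
  | s0, s2 => s1
  | s0, s3 => s6
  | s0, s4 => s8
  | s0, s5 => s7
  | s0, s6 => s3
  | s0, s7 => s5
  | s0, s8 => s4
  | s0, e => s0
  | s1, s0 => s2
  | s1, s1 => e
  | s1, s2 => s0
  | s1, s3 => s8
  | s1, s4 => s7
  | s1, s5 => s6
  | s1, s6 => s5
  | s1, s7 => s4
  | s1, s8 => s3
  | s1, e => s1
  | s2, s0 => s1
  | s2, s1 => s0
  | s2, s2 => e
  | s2, s3 => s7
  | s2, s4 => s6
  | s2, s5 => s8
  | s2, s6 => s4
  | s2, s7 => s3
  | s2, s8 => s5
  | s2, e => s2
  | s3, s0 => s6
  | s3, s1 => s8
  | s3, s2 => s7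
  | s3, s3 => e
  | s3, s4 => s5
  | s3, s5 => s4
  | s3, s6 => s0
  | s3, s7 => s2
  | s3, s8 => s1
  | s3, e => s3
  | s4, s0 => s8
  | s4, s1 => s7
  | s4, s2 => s6
  | s4, s3 => s5
  | s4, s4 => e
  | s4, s5 => s3
  | s4, s6 => s2
  | s4, s7 => s1
  | s4, s8 => s0
  | s4, e => s4
  | s5, s0 => s7
  | s5, s1 => s6
  | s5, s2 => s8
  | s5, s3 => s4
  | s5, s4 => s3
  | s5, s5 => e
  | s5, s6 => s1
  | s5, s7 => s0
  | s5, s8 => s2
  | s5, e => s5
  | s6, s0 => s3
  | s6, s1 => s5
  | s6, s2 => s4
  | s6, s3 => s0
  | s6, s4 => s2
  | s6, s5 => s1
  | s6, s6 => e
  | s6, s7 => s8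
  | s6, s8 => s7
  | s6, e => s6
  | s7, s0 => s5
  | s7, s1 => s4
  | s7, s2 => s3
  | s7, s3 => s2
  | s7, s4 => s1
  | s7, s5 => s0
  | s7, s6 => s8
  | s7, s7 => e
  | s7, s8 => s6
  | s7, e => s7
  | s8, s0 => s4
  | s8, s1 => s3
  | s8, s2 => s5
  | s8, s3 => s1
  | s8, s4 => s0
  | s8, s5 => s2
  | s8, s6 => s7
  | s8, s7 => s6
  | s8, s8 => e
  | s8, e => s8
  | e, s0 => s0
  | e, s1 => s1
  | e, s2 => s2
  | e, s3 => s3
  | e, s4 => s4
  | e, s5 => s5
  | e, s6 => s6
  | e, s7 => s7
  | e, s8 => s8
  | e, e => e
  end.
Definition fS (x y : S) : nat := match x, y with
  | s0, s0 => 1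
  | s0, s1 => 1
  | s0, s2 => 0
  | s0, s3 => 1
  | s0, s4 => 1
  | s0, s5 => 1
  | s0, s6 => 0
  | s0, s7 => 0
  | s0, s8 => 0
  | s0, e => 0
  | s1, s0 => 0
  | s1, s1 => 1
  | s1, s2 => 1
  | s1, s3 => 1
  | s1, s4 => 1
  | s1, s5 => 1
  | s1, s6 => 0
  | s1, s7 => 0
  | s1, s8 => 0
  | s1, e => 0
  | s2, s0 => 1
  | s2, s1 => 0
  | s2, s2 => 1
  | s2, s3 => 1
  | s2, s4 => 1
  | s2, s5 => 1
  | s2, s6 => 0
  | s2, s7 => 0
  | s2, s8 => 0
  | s2, e => 0
  | s3, s0 => 0
  | s3, s1 => 0
  | s3, s2 => 0
  | s3, s3 => 1
  | s3, s4 => 1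
  | s3, s5 => 0
  | s3, s6 => 1
  | s3, s7 => 1
  | s3, s8 => 1
  | s3, e => 0
  | s4, s0 => 0
  | s4, s1 => 0
  | s4, s2 => 0
  | s4, s3 => 0
  | s4, s4 => 1
  | s4, s5 => 1
  | s4, s6 => 1
  | s4, s7 => 1
  | s4, s8 => 1
  | s4, e => 0
  | s5, s0 => 0
  | s5, s1 => 0
  | s5, s2 => 0
  | s5, s3 => 1
  | s5, s4 => 0
  | s5, s5 => 1
  | s5, s6 => 1
  | s5, s7 => 1
  | s5, s8 => 1
  | s5, e => 0
  | s6, s0 => 1
  | s6, s1 => 1
  | s6, s2 => 1
  | s6, s3 => 0
  | s6, s4 => 0
  | s6, s5 => 0
  | s6, s6 => 1
  | s6, s7 => 1
  | s6, s8 => 0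
  | s6, e => 0
  | s7, s0 => 1
  | s7, s1 => 1
  | s7, s2 => 1
  | s7, s3 => 0
  | s7, s4 => 0
  | s7, s5 => 0
  | s7, s6 => 0
  | s7, s7 => 1
  | s7, s8 => 1
  | s7, e => 0
  | s8, s0 => 1
  | s8, s1 => 1
  | s8, s2 => 1
  | s8, s3 => 0
  | s8, s4 => 0
  | s8, s5 => 0
  | s8, s6 => 1
  | s8, s7 => 0
  | s8, s8 => 1
  | s8, e => 0
  | e, s0 => 0
  | e, s1 => 0
  | e, s2 => 0
  | e, s3 => 0
  | e, s4 => 0
  | e, s5 => 0
  | e, s6 => 0
  | e, s7 => 0
  | e, s8 => 0
  | e, e => 0
  end.
Definition toN (x : S) : nat := match x with s0 => 0 | s1 => 1 | s2 => 2 | s3 => 3 | s4 => 4 | s5 => 5 | s6 => 6 | s7 => 7 | s8 => 8 | e => 9 end.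
Definition ofN (k : nat) : S := match k with 0 => s0 | 1 => s1 | 2 => s2 | 3 => s3 | 4 => s4 | 5 => s5 | 6 => s6 | 7 => s7 | 8 => s8 | _ => e end.
Lemma toNK : cancel toN ofN. Proof. by case. Qed.
HB.instance Definition _ := Equality.copy S (can_type toNK).

Lemma opS_el x : opS e x = x. Proof. by case: x. Qed.
Lemma opS_er x : opS x e = x. Proof. by case: x. Qed.
Lemma fS_el x : fS e x = 0%N. Proof. by case: x. Qed.
Lemma fS_er x : fS x e = 0%N. Proof. by case: x. Qed.
Lemma opS_K x y : opS x (opS x y) = y. Proof. by case: x; case: y. Qed.
Lemma opS_Kr x y : opS (opS y x) x = y. Proof. by case: x; case: y. Qed.
Lemma opS_C x y z : opS x (opS y (opS y z)) = opS (opS (opS x y) y) z.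
Proof. by case: x; case: y; case: z. Qed.
Lemma fS_C x y z : (fS y z + fS y (opS y z) + fS x (opS y (opS y z)) =
   fS x y + fS (opS x y) y + fS (opS (opS x y) y) z)%N.
Proof. by case: x; case: y; case: z. Qed.
Lemma opS_nuc s : (forall y z, opS s (opS y z) = opS (opS s y) z) -> s = e.
Proof.
case: s => H //.
- by move: (H s1 s3).
- by move: (H s0 s3).
- by move: (H s0 s3).
- by move: (H s0 s1).
- by move: (H s0 s1).
- by move: (H s0 s1).
- by move: (H s0 s1).
- by move: (H s0 s1).
- by move: (H s0 s1).
Qed.

Lemma uniq_NoDup (T : eqType) (s : seq T) : uniq s -> List.NoDup s.
Proof.
elim: s => [|x s IH] /=; first by constructor.
move=> /andP [hx hs]; constructor; last exact: IH.
move=> hin; move: hx; rewrite (_ : x \in s) //.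
elim: s hin {IH hs} => //= y s IH [->|h]; rewrite in_cons ?eqxx //.
by rewrite IH ?orbT.
Qed.

Lemma InE (T : eqType) (x : T) (s : seq T) : List.In x s <-> x \in s.
Proof.
elim: s => [|y s IH] //=; rewrite in_cons; split.
- by case=> [->|/IH ->]; rewrite ?eqxx ?orbT.
- by case/orP=> [/eqP ->|/IH]; auto.
Qed.

Lemma length_size (T : Type) (s : seq T) : length s = size s.
Proof. by elim: s => //= x s ->. Qed.

Section Constr.
Variable n : nat.
Hypothesis hn : (1 < n)%N.
Local Notation LT := (S * 'Z_n)%type.
Definition opL (p q : LT) : LT :=
  (opS p.1 q.1, p.2 + q.2 + (fS p.1 q.1)%:R).

Lemma opL_C : is_C_identity opL.
Proof.
move=> [x a] [y b] [z c]; rewrite /opL /=.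
congr pair; first exact: opS_C.
have H := congr1 (fun k : nat => (k%:R : 'Z_n)) (fS_C x y z).
rewrite /= !natrD in H.
set F1 := (fS y z)%:R in H *; set F2 := (fS y (opS y z))%:R in H *.
set F3 := (fS x (opS y (opS y z)))%:R in H *.
set G1 := (fS x y)%:R in H *; set G2 := (fS (opS x y) y)%:R in H *.
set G3 := (fS (opS (opS x y) y) z)%:R in H *.
have -> : a + (b + (b + c + F1) + F2) + F3 = a + b + b + c + (F1 + F2 + F3) by ring.
rewrite H; ring.
Qed.

Lemma opL_loop : is_loop opL (e, 0).
Proof.
split; [|split].
- move=> [x a]; rewrite /opL; split; case: x => /=; congr pair; ring.
- move=> [s a] [u d].
  exists (opS s u, d - a - (fS s (opS s u))%:R); split.
  + rewrite /opL /= opS_K; congr pair; ring.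
  + move=> [t c]; rewrite /opL /= => [[<- <-]]; rewrite opS_K; congr pair; ring.
- move=> [s a] [u d].
  exists (opS u s, d - a - (fS (opS u s) s)%:R); split.
  + rewrite /opL /= opS_Kr; congr pair; ring.
  + move=> [t c]; rewrite /opL /= => [[<- <-]]; rewrite opS_Kr; congr pair; ring.
Qed.

End Constr.

Local Close Scope ring_scope.
Theorem corollary3p4 :
  forall n : nat, (1 < n)%coq_nat ->
  exists (L : Type) (op : L -> L -> L) (e : L),
    is_C_loop op e /\
    ~ associative_op op /\
    ~ commutative_op op /\
    has_exactly (in_nucleus op) n.
Proof.
move=> n /ltP hn.
exists (S * 'Z_n)%type, (@opL n), (e, 0%R).
split; first by split; [exact: opL_loop | exact: opL_C].
split.
  move=> H; have := H (s0, 0%R) (s1, 0%R) (s3, 0%R).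
  by rewrite /opL /=; case.
split.
  move=> H; have := congr1 snd (H (s0, 0%R) (s1, 0%R)).
  rewrite /opL; cbn [fst snd]; rewrite !add0r [fS s0 s1]/= [fS s1 s0]/=.
  move/eqP; rewrite ?mulr1n ?mulr0n ?oner_eq0 //.
exists (map (fun k : 'Z_n => (e, k)) (enum 'Z_n)).
split; [|split].
- apply: uniq_NoDup; rewrite map_inj_uniq ?enum_uniq //.
  by move=> k1 k2 [].
- rewrite length_size size_map -cardE card_ord Zp_cast //.
- move=> [s a]; rewrite InE; split.
  + move=> /mapP [k _ [-> ->]] [y b] [z c].
    rewrite /opL; cbn [fst snd].
    rewrite !opS_el !opS_er !fS_el !fS_er.
    split; [|split]; congr pair; ring.
  + move=> Hn.
    have -> : s = e.
      apply: opS_nuc => y z.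
      have [H1 _] := Hn (y, 0%R) (z, 0%R).
      by move/(congr1 fst): H1.
    apply/mapP; exists a => //; exact: mem_enum.
Qed.
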